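(* For every integer $m\ge 2$ and every integer $i$ with $1\le i\le m-1$, $$d_i^2(m)\bigl(d_i^2(m)-d_{i-1}(m)d_{i+1}(m)\bigr)>d_{i-1}^2(m)\bigl(d_{i+1}^2(m)-d_i(m)d_{i+2}(m)\bigr).$$
   Context: For integers $m\ge 0$ and $0\le i\le m$, the Boros–Moll numbers are $$d_i(m)=2^{-2m}\sum_{k=i}^{m}2^k\binom{2m-2k}{m-k}\binom{m+k}{k}\binom{k}{i},$$ i.e. $d_i(m)$ is the coefficient of $x^i$ in $P_m(x)=2^{-2m}\sum_{k=0}^m 2^k\binom{2m-2k}{m-k}\binom{m+k}{k}(x+1)^k$. By convention $d_i(m)=0$ for $i>m$ (consistent with the formula, since $\binom{k}{i}=0$ for $k<i$). *)

(* Defs.v *)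
From mathcomp Require Import all_boot all_order all_algebra.
Set Implicit Arguments. Unset Strict Implicit. Unset Printing Implicit Defensive.
Import Order.TTheory GRing.Theory Num.Theory.
Local Open Scope ring_scope.

(* Boros--Moll numbers, as rationals:
   d_i(m) = 2^{-2m} sum_{k=i}^{m} 2^k C(2m-2k, m-k) C(m+k, k) C(k, i).
   For i > m the sum is empty, giving 0 (the stated convention). *)
Definition bm (m i : nat) : rat :=
  (2%:R ^+ (2 * m))^-1 *
  \sum_(i <= k < m.+1)
     (2 ^ k * 'C(2 * m - 2 * k, m - k) * 'C(m + k, k) * 'C(k, i))%N%:R.

(* Main.v *)
Require Import Defs.
From mathcomp Require Import all_boot all_order all_algebra.
From mathcomp Require Import ring lra zify.
Import Order.TTheory GRing.Theory Num.Theory.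
Local Open Scope ring_scope.

Definition T (m k : nat) : rat :=
  (2 ^ k * 'C(2 * m - 2 * k, m - k) * 'C(m + k, k))%N%:R.
Definition S (m l : nat) : rat := \sum_(0 <= k < m.+1) T m k * 'C(k, l)%:R.

Lemma bmE m l : bm m l = (2%:R ^+ (2 * m))^-1 * S m l.
Proof.
rewrite /bm /S; congr (_ * _).
case: (leqP l m.+1) => hl.
- rewrite [RHS](big_cat_nat (leq0n l) hl) /= [X in X + _]big1_seq ?add0r.
  + by apply: eq_bigr => k _; rewrite /T !natrM.
  + move=> k /andP[_]; rewrite mem_index_iota => /andP[_ hk].
    by rewrite bin_small // mulr0.
- rewrite big_geq ?(ltnW hl) //. 
  rewrite big1_seq // => k /andP[_]; rewrite mem_index_iota => /andP[_ hk].
  by rewrite bin_small ?mulr0 //; lia.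
Qed.

Lemma binL k l : (l.+1%:R * 'C(k, l.+1)%:R : rat) = 'C(k, l)%:R * (k%:R - l%:R).
Proof.
rewrite -natrM mul_bin_left natrM mulrC.
case: (leqP l k) => h; first by rewrite natrB.
by rewrite bin_small // ?mul0r ?mulr0.
Qed.

Lemma binD k l : ((k.+1%:R - l%:R) * 'C(k.+1, l)%:R : rat) = k.+1%:R * 'C(k, l)%:R.
Proof.
have := mul_bin_down k.+1 l => /= /(congr1 (fun x => x%:R : rat)).
rewrite !natrM => ->.
case: (leqP l k.+1) => h; first by rewrite natrB.
by rewrite !bin_small ?mulr0 //; lia.
Qed.

Lemma cbin r : ('C((2*r).+2, r.+1) * r.+1 = 2 * (2*r).+1 * 'C(2*r, r))%N.
Proof.
have h1 := mul_bin_diag (2*r).+2 r.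
have h2 := mul_bin_diag (2*r).+1 r.
have h3 : 'C((2*r).+1, r.+1) = 'C((2*r).+1, r).
  by rewrite -bin_sub; [congr 'C(_, _); lia | lia].
simpl in h1, h2.
rewrite mulnC -h1 -mulnA h2 h3; ring.
Qed.

Lemma Tstep_nat k r :
  ((2^k.+1 * 'C(2*r, r) * 'C((k+r.+1+k).+1, k.+1)) * ((2*r).+1 * k.+1) =
  (2^k * 'C((2*r).+2, r.+1) * 'C(k+r.+1+k, k)) * (r.+1 * (k+r.+1+k).+1))%N.
Proof.
have h1 := mul_bin_diag (k+r.+1+k).+1 k. simpl in h1.
have h2 := cbin r.
transitivity (2^k * (2 * (2*r).+1 * 'C(2*r, r)) * (k.+1 * 'C((k+r.+1+k).+1, k.+1)))%N.
  by rewrite expnS; ring.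
rewrite -h2 -h1; ring.
Qed.

Lemma Tstep m k : (k < m)%N ->
  T m k.+1 * ((2 * m%:R - 2 * k%:R - 1) * k.+1%:R) =
  T m k * ((m%:R - k%:R) * (m%:R + k%:R + 1)).
Proof.
move=> hk; have [r ->] : exists r, m = (k + r.+1)%N by exists (m - k.+1)%N; lia.
have e1 : (2 * (k + r.+1) - 2 * k.+1 = 2 * r)%N by lia.
have e2 : (k + r.+1 - k.+1 = r)%N by lia.
have e3 : (k + r.+1 + k.+1 = (k+r.+1+k).+1)%N by lia.
have e4 : (2 * (k + r.+1) - 2 * k = (2*r).+2)%N by lia.
have e5 : (k + r.+1 - k = r.+1)%N by lia.
rewrite /T e1 e2 e3 e4 e5.
have -> : (2 * (k + r.+1)%:R - 2 * k%:R - 1 : rat) = (2*r).+1%:R.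
  ring.
have -> : ((k + r.+1)%:R - k%:R : rat) = r.+1%:R by ring.
have -> : ((k + r.+1)%:R + k%:R + 1 : rat) = (k + r.+1 + k).+1%:R.
  by ring.
by rewrite -!natrM Tstep_nat.
Qed.


Lemma rec_S m l : (l < m)%N ->
  l.+1%:R * l.+2%:R * S m l.+2 + (m%:R + l%:R + 1) * (m%:R - l%:R) * S m l
  = l.+1%:R * (2 * m%:R + 1) * S m l.+1.
Proof.
move=> hlm.
pose h k := T m k * 'C(k, l)%:R.
pose f (k : nat) : rat := (k%:R - l%:R) * (k%:R - l%:R - 1)
   + (m%:R + l%:R + 1) * (m%:R - l%:R) - (2 * m%:R + 1) * (k%:R - l%:R).
pose G (k : nat) : rat := (2 * m%:R - 2 * k%:R + 1) * (k%:R - l%:R) * h k.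
have per : forall k, l.+1%:R * l.+2%:R * (T m k * 'C(k, l.+2)%:R)
   + (m%:R + l%:R + 1) * (m%:R - l%:R) * (T m k * 'C(k, l)%:R)
   - l.+1%:R * (2 * m%:R + 1) * (T m k * 'C(k, l.+1)%:R) = h k * f k.
  move=> k.
  have n1 : (l.+1%:R : rat) != 0 by rewrite pnatr_eq0.
  have n2 : (l.+2%:R : rat) != 0 by rewrite pnatr_eq0.
  have c1 : ('C(k, l.+1)%:R : rat) = 'C(k, l)%:R * (k%:R - l%:R) / l.+1%:R.
    by rewrite -binL; field; apply: lt0r_neq0; have := ler0n rat l; lra.
  have c2 : ('C(k, l.+2)%:R : rat) = 'C(k, l.+1)%:R * (k%:R - l.+1%:R) / l.+2%:R.
    by rewrite -binL; field; apply: lt0r_neq0; have := ler0n rat l; lra.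
  rewrite c2 c1 /h /f; field.
  by apply/andP; split; apply: lt0r_neq0; have := ler0n rat l; lra.
have tel : forall k, (0 <= k < m)%N -> h k * f k = G k.+1 - G k.
  move=> k /andP[_ hk].
  have g1 : G k.+1 = T m k.+1 * ((2 * m%:R - 2 * k%:R - 1) * k.+1%:R) * 'C(k, l)%:R.
    rewrite /G /h.
    transitivity ((2 * m%:R - 2 * k.+1%:R + 1) * T m k.+1 *
       ((k.+1%:R - l%:R) * 'C(k.+1, l)%:R)); first by ring.
    rewrite binD; ring.
  rewrite g1 Tstep // /G /h /f; ring.
have sumE : \sum_(0 <= k < m.+1) h k * f k = 0.
  rewrite big_nat_recr //= (telescope_sumr_eq G _ (leq0n m) tel) //.
  have -> : G 0%N = 0.
    rewrite /G /h; case: l {per tel hlm f G h} => [|l]; first by rewrite subrr mulr0 mul0r.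
    by rewrite bin_small // mulr0n !mulr0.
  rewrite /G /h /f subr0; ring.
apply/eqP; rewrite -subr_eq0; apply/eqP.
rewrite -[RHS]sumE -(eq_bigr _ (fun k _ => per k)) /S.
by rewrite !sumrB !mulr_sumr big_split.
Qed.

Lemma rec_bm m l : (l < m)%N ->
  l.+1%:R * l.+2%:R * bm m l.+2 + (m%:R + l%:R + 1) * (m%:R - l%:R) * bm m l
  = l.+1%:R * (2 * m%:R + 1) * bm m l.+1.
Proof.
move=> h; rewrite !bmE.
transitivity ((2%:R ^+ (2 * m))^-1 * (l.+1%:R * l.+2%:R * S m l.+2
   + (m%:R + l%:R + 1) * (m%:R - l%:R) * S m l)); first by ring.
rewrite rec_S //; ring.
Qed.

Lemma bm_ge0 m l : 0 <= bm m l.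
Proof.
rewrite /bm; apply: mulr_ge0; first by rewrite invr_ge0 exprn_ge0.
by apply: sumr_ge0 => k _; rewrite ler0n.
Qed.

Lemma bm_gt0 m l : (l <= m)%N -> 0 < bm m l.
Proof.
move=> hl; rewrite /bm; apply: mulr_gt0; first by rewrite invr_gt0 exprn_gt0.
rewrite big_nat_recr //=; apply: ltr_wpDl.
  by apply: sumr_ge0 => k _; rewrite ler0n.
rewrite ltr0n !muln_gt0 expn_gt0 /= !bin_gt0 hl leq_addr subnn andbT.
by [].

Qed.

Lemma bm_out m : bm m m.+1 = 0.
Proof. by rewrite /bm big_geq // mulr0. Qed.

Lemma bounds m l : (l <= m)%N ->
  l.+1%:R * bm m l.+1 <= (m%:R - l%:R) * bm m l /\
  2 * (m%:R - l%:R) * bm m l <= (2 * l%:R + 3) * bm m l.+1.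
Proof.
move=> hl; have [k [-> hk0]] : exists k, l = (m - k)%N /\ (k <= m)%N.
  by exists (m - l)%N; split; lia.
clear hl; move: hk0; elim: k => [|k IH] hk.
  rewrite subn0 bm_out subrr !mulr0 mul0r; split; lra.
have hl' : (m - k.+1 < m)%N by lia.
have e1 : (m - k.+1).+1 = (m - k)%N by lia.
have := rec_bm _ _ hl'.
have [IHU IHL] := IH (ltnW hk).
move: IHU IHL; rewrite -e1.
have d0 := bm_ge0 m (m - k.+1); have d1 := bm_ge0 m (m - k.+1).+1.
have d2 := bm_ge0 m (m - k.+1).+2.
move: d0 d1 d2.
set x := (m - k.+1)%N.
have hx : (x.+1%:R : rat) <= m%:R by rewrite ler_nat; lia.
have x0 := ler0n rat x.
have -> : (x.+1%:R : rat) = x%:R + 1 by ring.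
have -> : (x.+2%:R : rat) = x%:R + 2 by ring.
set d0 := bm m x; set d1 := bm m x.+1; set d2 := bm m x.+2.
set X := (x%:R : rat) in hx x0 *; set M := (m%:R : rat) in hx *.
move=> d0p d1p d2p U L rec.
split.
- have hp : 0 < M + X + 1 by lra.
  rewrite -subr_ge0 -(pmulr_rge0 _ hp).
  have h1 : 0 <= (X + 1) * ((M - (X + 1)) * d1 - (X + 2) * d2).
    by apply: mulr_ge0; lra.
  have h2 : 0 <= (X + 1) * d1 by apply: mulr_ge0; lra.
  nra.
- have hp : 0 < (M + X + 1) * (2 * X + 5) by apply: mulr_gt0; lra.
  rewrite -subr_ge0 -(pmulr_rge0 _ hp).
  have h1 : 0 <= (X + 1) * (X + 2) * ((2 * (X + 1) + 3) * d2 - 2 * (M - (X + 1)) * d1).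
    by apply: mulr_ge0; [apply: mulr_ge0|]; lra.
  have h2 : 0 <= (M - X - 1) * d1 by apply: mulr_ge0; lra.
  nra.
Qed.

Ltac nzt ii nn := repeat (apply/andP; split); apply: lt0r_neq0;
  have := ler0n rat ii; have := ler0n rat nn; nra.

Theorem theorem1p1 (m i : nat) :
  (2 <= m)%N -> (1 <= i)%N -> (i <= m - 1)%N ->
  bm m i ^+ 2 * (bm m i ^+ 2 - bm m i.-1 * bm m i.+1) >
  bm m i.-1 ^+ 2 * (bm m i.+1 ^+ 2 - bm m i * bm m i.+2).
Proof.
move=> hm hi him.
have [ii hii] : exists ii, i = ii.+1 by exists i.-1; lia.
have [nn hnn] : exists nn, m = (ii + nn).+2 by exists (m - ii - 2)%N; lia.
subst i m => /=.
set M := (ii + nn).+2.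
have r1 := rec_bm M ii (ltac:(rewrite /M; lia)).
have r2 := rec_bm M ii.+1 (ltac:(rewrite /M; lia)).
have [bU bL] := bounds M ii.+1 (ltac:(rewrite /M; lia)).
have apos : 0 < bm M ii.+1 by apply: bm_gt0; rewrite /M; lia.
have hM : (M%:R : rat) = ii%:R + nn%:R + 2 by rewrite /M; ring.
rewrite hM in r1 r2 bU bL.
set a := bm M ii.+1 in r1 r2 bU bL apos *.
set b := bm M ii.+2 in r1 r2 bU bL *.
set c := bm M ii in r1 r2 bU bL *.
set e := bm M ii.+3 in r1 r2 bU bL *.
have x0 := ler0n rat ii; have y0 := ler0n rat nn.
set x := (ii%:R : rat) in x0 r1 r2 bU bL hM *.
set y := (nn%:R : rat) in y0 r1 r2 bU bL hM *.
have hc : c = (ii.+1%:R * (2 * (x + y + 2) + 1) * a - ii.+1%:R * ii.+2%:R * b)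
           / ((x + y + 2 + x + 1) * (x + y + 2 - x)).
  rewrite -r1; field; rewrite /x /y; nzt ii nn.
have he : e = (ii.+2%:R * (2 * (x + y + 2) + 1) * b
              - (x + y + 2 + ii.+1%:R + 1) * (x + y + 2 - ii.+1%:R) * a)
           / (ii.+2%:R * ii.+3%:R).
  rewrite -r2; field; rewrite /x /y; nzt ii nn.
pose p := (2 * ii.+1%:R + 3) * b - 2 * (x + y + 2 - ii.+1%:R) * a.
pose q := (x + y + 2 - ii.+1%:R) * a - ii.+2%:R * b.
have p0 : 0 <= p by rewrite /p subr_ge0.
have q0 : 0 <= q by rewrite /q subr_ge0.
have pq : 0 < p \/ 0 < q.
  have hpos : 0 < ii.+2%:R * p + (2 * ii.+1%:R + 3) * q.
    have -> : ii.+2%:R * p + (2 * ii.+1%:R + 3) * q = (y + 1) * a.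
      by rewrite /p /q /x /y; ring.
    by apply: mulr_gt0 => //; lra.
  case: (boolP (0 < p)) => hp; first by left.
  right; have p00 : p = 0 by apply/eqP; rewrite eq_le p0 andbT leNgt.
  rewrite p00 mulr0 add0r pmulr_rgt0 // in hpos.
  have := ler0n rat ii.+1; lra.
rewrite -subr_gt0.
have key : a ^+ 2 * (a ^+ 2 - c * b) - c ^+ 2 * (b ^+ 2 - a * e) =
  ((((303*1000+228)*ii + (457*1000+128)*ii*ii + (387*1000+128)*ii*ii*ii + (201*1000+20)*ii*ii*ii*ii + (65*1000+328)*ii*ii*ii*ii*ii + (12*1000+912)*ii*ii*ii*ii*ii*ii + (1*1000+408)*ii*ii*ii*ii*ii*ii*ii + 64*ii*ii*ii*ii*ii*ii*ii*ii + (124*1000+299)*nn + (379*1000+596)*nn*ii + (492*1000+527)*nn*ii*ii + (352*1000+390)*nn*ii*ii*ii + (150*1000+264)*nn*ii*ii*ii*ii + (38*1000+200)*nn*ii*ii*ii*ii*ii + (5*1000+360)*nn*ii*ii*ii*ii*ii*ii + 320*nn*ii*ii*ii*ii*ii*ii*ii + (68*1000+1)*nn*nn + (176*1000+435)*nn*nn*ii + (189*1000+496)*nn*nn*ii*ii + (108*1000+20)*nn*nn*ii*ii*ii + (34*1000+520)*nn*nn*ii*ii*ii*ii + (5*1000+872)*nn*nn*ii*ii*ii*ii*ii + 416*nn*nn*ii*ii*ii*ii*ii*ii + (16*1000+944)*nn*nn*nn + (36*1000+344)*nn*nn*nn*ii + (30*1000+938)*nn*nn*nn*ii*ii + (13*1000+94)*nn*nn*nn*ii*ii*ii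 + (2*1000+760)*nn*nn*nn*ii*ii*ii*ii + 232*nn*nn*nn*ii*ii*ii*ii*ii + (1*1000+626)*nn*nn*nn*nn + (2*1000+777)*nn*nn*nn*nn*ii + (1*1000+741)*nn*nn*nn*nn*ii*ii + 476*nn*nn*nn*nn*ii*ii*ii + 48*nn*nn*nn*nn*ii*ii*ii*ii)%N%:R * q^+4 + ((138*1000+222) + (500*1000+367)*ii + (782*1000+722)*ii*ii + (690*1000+591)*ii*ii*ii + (375*1000+466)*ii*ii*ii*ii + (128*1000+612)*ii*ii*ii*ii*ii + (27*1000+48)*ii*ii*ii*ii*ii*ii + (3*1000+184)*ii*ii*ii*ii*ii*ii*ii + 160*ii*ii*ii*ii*ii*ii*ii*ii + (197*1000+232)*nn + (625*1000+424)*nn*ii + (846*1000+920)*nn*ii*ii + (637*1000+162)*nn*ii*ii*ii + (289*1000+366)*nn*ii*ii*ii*ii + (80*1000+332)*nn*ii*ii*ii*ii*ii + (13*1000+48)*nn*ii*ii*ii*ii*ii*ii + (1*1000+88)*nn*ii*ii*ii*ii*ii*ii*ii + 32*nn*ii*ii*ii*ii*ii*ii*ii*ii + (107*1000+4)*nn*nn + (288*1000+706)*nn*nn*ii + (323*1000+590)*nn*nn*ii*ii + (193*1000+470)*nn*nn*ii*ii*ii + (65*1000+462)*nn*nn*ii*ii*ii*ii + (12*1000+64)*nn*nn*ii*ii*ii*ii*ii + (1*1000+8)*nn*nn*ii*ii*ii*ii*ii*ii + 16*nn*nn*ii*ii*ii*ii*ii*ii*ii + (26*1000+550)*nn*nn*nn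 + (59*1000+463)*nn*nn*nn*ii + (52*1000+944)*nn*nn*nn*ii*ii + (23*1000+457)*nn*nn*nn*ii*ii*ii + (5*1000+178)*nn*nn*nn*ii*ii*ii*ii + 456*nn*nn*nn*ii*ii*ii*ii*ii + (2*1000+556)*nn*nn*nn*nn + (4*1000+614)*nn*nn*nn*nn*ii + (3*1000+72)*nn*nn*nn*nn*ii*ii + 894*nn*nn*nn*nn*ii*ii*ii + 96*nn*nn*nn*nn*ii*ii*ii*ii)%N%:R * p * q^+3 + ((82*1000+590) + (308*1000+731)*ii + (500*1000+420)*ii*ii + (459*1000+319)*ii*ii*ii + (261*1000+40)*ii*ii*ii*ii + (94*1000+24)*ii*ii*ii*ii*ii + (20*1000+952)*ii*ii*ii*ii*ii*ii + (2*1000+640)*ii*ii*ii*ii*ii*ii*ii + 144*ii*ii*ii*ii*ii*ii*ii*ii + (117*1000+84)*nn + (384*1000+666)*nn*ii + (542*1000+330)*nn*ii*ii + (427*1000+798)*nn*ii*ii*ii + (205*1000+978)*nn*ii*ii*ii*ii + (61*1000+784)*nn*ii*ii*ii*ii*ii + (11*1000+232)*nn*ii*ii*ii*ii*ii*ii + (1*1000+128)*nn*ii*ii*ii*ii*ii*ii*ii + 48*nn*ii*ii*ii*ii*ii*ii*ii*ii + (62*1000+970)*nn*nn + (176*1000+99)*nn*nn*ii + (205*1000+237)*nn*nn*ii*ii + (128*1000+211)*nn*nn*ii*ii*ii + (45*1000+725)*nn*nn*ii*ii*ii*ii + (9*1000+58)*nn*nn*ii*ii*ii*ii*ii + 864*nn*nn*ii*ii*ii*ii*ii*ii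 + 24*nn*nn*ii*ii*ii*ii*ii*ii*ii + (15*1000+588)*nn*nn*nn + (36*1000+320)*nn*nn*nn*ii + (33*1000+691)*nn*nn*nn*ii*ii + (15*1000+568)*nn*nn*nn*ii*ii*ii + (3*1000+587)*nn*nn*nn*ii*ii*ii*ii + 330*nn*nn*nn*ii*ii*ii*ii*ii + (1*1000+512)*nn*nn*nn*nn + (2*1000+876)*nn*nn*nn*nn*ii + (2*1000+28)*nn*nn*nn*nn*ii*ii + 628*nn*nn*nn*nn*ii*ii*ii + 72*nn*nn*nn*nn*ii*ii*ii*ii)%N%:R * p^+2 * q^+2 + ((21*1000+904) + (84*1000+440)*ii + (141*1000+628)*ii*ii + (135*1000+50)*ii*ii*ii + (80*1000+108)*ii*ii*ii*ii + (30*1000+282)*ii*ii*ii*ii*ii + (7*1000+128)*ii*ii*ii*ii*ii*ii + 956*ii*ii*ii*ii*ii*ii*ii + 56*ii*ii*ii*ii*ii*ii*ii*ii + (30*1000+832)*nn + (104*1000+732)*nn*ii + (153*1000+384)*nn*ii*ii + (126*1000+527)*nn*ii*ii*ii + (64*1000+348)*nn*ii*ii*ii*ii + (20*1000+701)*nn*ii*ii*ii*ii*ii + (4*1000+132)*nn*ii*ii*ii*ii*ii*ii + 472*nn*ii*ii*ii*ii*ii*ii*ii + 24*nn*ii*ii*ii*ii*ii*ii*ii*ii + (16*1000+440)*nn*nn + (47*1000+508)*nn*nn*ii + (57*1000+370)*nn*nn*ii*ii + (37*1000+299)*nn*nn*ii*ii*ii + (13*1000+960)*nn*nn*ii*ii*ii*ii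 + (2*1000+955)*nn*nn*ii*ii*ii*ii*ii + 316*nn*nn*ii*ii*ii*ii*ii*ii + 12*nn*nn*ii*ii*ii*ii*ii*ii*ii + (4*1000+72)*nn*nn*nn + (9*1000+840)*nn*nn*nn*ii + (9*1000+474)*nn*nn*nn*ii*ii + (4*1000+546)*nn*nn*nn*ii*ii*ii + (1*1000+88)*nn*nn*nn*ii*ii*ii*ii + 104*nn*nn*nn*ii*ii*ii*ii*ii + 400*nn*nn*nn*nn + 800*nn*nn*nn*nn*ii + 596*nn*nn*nn*nn*ii*ii + 196*nn*nn*nn*nn*ii*ii*ii + 24*nn*nn*nn*nn*ii*ii*ii*ii)%N%:R * p^+3 * q + ((8*1000+640)*ii + (14*1000+976)*ii*ii + (14*1000+816)*ii*ii*ii + (9*1000+160)*ii*ii*ii*ii + (3*1000+628)*ii*ii*ii*ii*ii + 900*ii*ii*ii*ii*ii*ii + 128*ii*ii*ii*ii*ii*ii*ii + 8*ii*ii*ii*ii*ii*ii*ii*ii + (3*1000+40)*nn + (10*1000+656)*nn*ii + (16*1000+176)*nn*ii*ii + (13*1000+920)*nn*ii*ii*ii + (7*1000+454)*nn*ii*ii*ii*ii + (2*1000+558)*nn*ii*ii*ii*ii*ii + 554*nn*ii*ii*ii*ii*ii*ii + 70*nn*ii*ii*ii*ii*ii*ii*ii + 4*nn*ii*ii*ii*ii*ii*ii*ii*ii + (1*1000+608)*nn*nn + (4*1000+788)*nn*nn*ii + (5*1000+970)*nn*nn*ii*ii + (4*1000+23)*nn*nn*ii*ii*ii + (1*1000+573)*nn*nn*ii*ii*ii*ii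 + 354*nn*nn*ii*ii*ii*ii*ii + 42*nn*nn*ii*ii*ii*ii*ii*ii + 2*nn*nn*ii*ii*ii*ii*ii*ii*ii + 400*nn*nn*nn + (1*1000+0)*nn*nn*nn*ii + 996*nn*nn*nn*ii*ii + 494*nn*nn*nn*ii*ii*ii + 122*nn*nn*nn*ii*ii*ii*ii + 12*nn*nn*nn*ii*ii*ii*ii*ii + 40*nn*nn*nn*nn + 84*nn*nn*nn*nn*ii + 66*nn*nn*nn*nn*ii*ii + 23*nn*nn*nn*nn*ii*ii*ii + 3*nn*nn*nn*nn*ii*ii*ii*ii)%N%:R * p^+4 + ((86*1000+616))%:R * q^+4 + ((2*1000+176))%:R * p^+4)) / ((y + 1) ^+ 4 * ((x + y + 2 + x + 1) * (x + y + 2 - x)) ^+ 2 * (ii.+2%:R * ii.+3%:R)).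
  rewrite hc he /p /q; field; rewrite /x /y; nzt ii nn.
rewrite key; clear key hc he r1 r2 bU bL; apply: divr_gt0; last first.
  apply: mulr_gt0; [apply: mulr_gt0|].
  - by apply: exprn_gt0; lra.
  - by apply: exprn_gt0; apply: mulr_gt0; lra.
  - by apply: mulr_gt0; rewrite ltr0n.
rewrite -addrA; apply: ltr_wpDl.
  apply: addr_ge0; [apply: addr_ge0; [apply: addr_ge0; [apply: addr_ge0|]|]|].
  - exact: mulr_ge0 (ler0n _ _) (exprn_ge0 _ q0).
  - exact: mulr_ge0 (mulr_ge0 (ler0n _ _) p0) (exprn_ge0 _ q0).
  - exact: mulr_ge0 (mulr_ge0 (ler0n _ _) (exprn_ge0 _ p0)) (exprn_ge0 _ q0).
  - exact: mulr_ge0 (mulr_ge0 (ler0n _ _) (exprn_ge0 _ p0)) q0.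
  - exact: mulr_ge0 (ler0n _ _) (exprn_ge0 _ p0).
case: pq => h.
  apply: ltr_wpDl; first by apply: mulr_ge0; [exact: ler0n | apply: exprn_ge0].
  by apply: mulr_gt0; [rewrite ltr0n | apply: exprn_gt0].
apply: ltr_wpDr; first by apply: mulr_ge0; [exact: ler0n | apply: exprn_ge0].
by apply: mulr_gt0; [rewrite ltr0n | apply: exprn_gt0].
Qed.
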